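(* For every $k\in\mathbb{N}$, the feasible region $P_k\subseteq[0,1]^{\mathcal{S}_k}$ is convex.
   Context: $\mathcal{S}_n$ denotes the set of permutations of $[n]$ and $\mathcal{S}$ the set of all finite permutations. For distinct reals $x_1,\dots,x_n$, $\mathrm{std}(x_1,\dots,x_n)$ is the unique $\pi\in\mathcal{S}_n$ with $\pi(i)<\pi(j)\iff x_i<x_j$; for $\sigma\in\mathcal{S}_n$ and $I\subseteq[n]$, $\mathrm{pat}_I(\sigma)=\mathrm{std}((\sigma(i))_{i\in I})$. For $\pi\in\mathcal{S}_k$, $\sigma\in\mathcal{S}_n$, $\mathrm{c\text{-}occ}(\pi,\sigma)$ is the number of intervals $I\subseteq[n]$ with $\mathrm{pat}_I(\sigma)=\pi$ and $\widetilde{\mathrm{c\text{-}occ}}(\pi,\sigma)=\mathrm{c\text{-}occ}(\pi,\sigma)/n$. The feasible region is $$P_k=\{\vec v\in[0,1]^{\mathcal{S}_k}\mid \exists(\sigma^m)_{m\in\mathbb N}\in\mathcal{S}^{\mathbb N}: |\sigma^m|\to\infty,\ \widetilde{\mathrm{c\text{-}occ}}(\pi,\sigma^m)\to v_\pi\ \forall\pi\in\mathcal{S}_k\}.$$ *)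

(* Defs.v *)
From HB Require Import structures.
From mathcomp Require Import all_boot all_order all_fingroup.
From Stdlib Require Import Reals.

Set Implicit Arguments.
Unset Strict Implicit.
Unset Printing Implicit Defensive.

(* Positions are 0-based: [n] is identified with 'I_n = {0,..,n-1}. *)

(* value sigma(j) of a permutation at a natural index (0 outside range) *)
Definition perm_at (n : nat) (sigma : 'S_n) (j : nat) : nat :=
  match @insub nat (fun x => x < n) 'I_n j with
  | Some x => val (sigma x)
  | None => 0
  end.

(* pat_I(sigma) = pi for the interval I = {i, ..., i+k-1} (with i+k <= n):
   std((sigma(i+a))_{a<k}) = pi, i.e. pi(a) < pi(b) <-> sigma(i+a) < sigma(i+b). *)
Definition pat_at (k n : nat) (pi : 'S_k) (sigma : 'S_n) (i : nat) : bool :=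
  (i + k <= n) &&
  [forall a : 'I_k, forall b : 'I_k,
     (pi a < pi b) == (perm_at sigma (i + a) < perm_at sigma (i + b))].

Definition cocc (k n : nat) (pi : 'S_k) (sigma : 'S_n) : nat :=
  count (pat_at pi sigma) (iota 0 n.+1).

Definition cocc_tilde (k n : nat) (pi : 'S_k) (sigma : 'S_n) : R :=
  (INR (cocc pi sigma) / INR n)%R.

Definition feasible (k : nat) (v : 'S_k -> R) : Prop :=
  (forall pi : 'S_k, (0 <= v pi <= 1)%R) /\
  exists (N : nat -> nat) (sigma : forall m : nat, 'S_(N m)),
    (forall B : nat, exists M : nat, forall m : nat, (M <= m)%coq_nat -> (B <= N m)%coq_nat) /\
    (forall pi : 'S_k, Un_cv (fun m => cocc_tilde pi (sigma m)) (v pi)).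

(* Main.v *)
Require Import Defs.
From HB Require Import structures.
From mathcomp Require Import all_boot all_order all_fingroup.
From Stdlib Require Import Reals Lra ZArith.
From mathcomp Require Import zify.
Set Implicit Arguments.
Unset Strict Implicit.

Definition wm k (pi : 'S_k) (f : nat -> nat) (i : nat) : bool :=
  [forall a : 'I_k, forall b : 'I_k, (pi a < pi b) == (f (i + a) < f (i + b))].
Definition cnt k (pi : 'S_k) (f : nat -> nat) (n : nat) : nat :=
  count (fun i => (i + k <= n) && wm pi f i) (iota 0 n.+1).

Lemma cocc_cnt k n (pi : 'S_k) (s : 'S_n) : cocc pi s = cnt pi (perm_at s) n.
Proof. by []. Qed.

Lemma wm_ext k (pi : 'S_k) f g i :
  (forall a, a < k -> f (i + a) = g (i + a)) -> wm pi f i = wm pi g i.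
Proof.
move=> H; apply: eq_forallb => a; apply: eq_forallb => b.
by rewrite !H.
Qed.

Definition catf (f : nat -> nat) n (g : nat -> nat) : nat -> nat :=
  fun j => if j < n then f j else n + g (j - n).

Lemma count_le_add (s : seq nat) (P Q R : pred nat) :
  (forall i, i \in s -> P i <= Q i + R i) -> count P s <= count Q s + count R s.
Proof.
elim: s => //= x s IH H.
have h1 := H x (mem_head _ _).
have h2 : count P s <= count Q s + count R s.
  by apply: IH => i hi; apply: H; rewrite inE hi orbT.
lia.
Qed.

Lemma count_le_in (s : seq nat) (P Q : pred nat) :
  (forall i, i \in s -> P i <= Q i) -> count P s <= count Q s.
Proof.
elim: s => //= x s IH H.
have h1 := H x (mem_head _ _).
have h2 : count P s <= count Q s.
  by apply: IH => i hi; apply: H; rewrite inE hi orbT.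
lia.
Qed.

Lemma count_cross n k : count (fun i => n < i + k) (iota 0 n) <= k.
Proof.
case: (leqP k n) => hk.
  have E : n = (n - k) + k by lia.
  rewrite [X in iota 0 X]E iotaD count_cat.
  have -> : count (fun i => n < i + k) (iota 0 (n - k)) = 0.
    apply/eqP; rewrite -leqn0.
    apply: (leq_trans (@count_le_in _ _ pred0 _)).
      move=> i; rewrite mem_iota => /andP [_ hi] /=; lia.
    by rewrite count_pred0.
  by rewrite add0n (leq_trans (count_size _ _)) // size_iota.
by rewrite (leq_trans (count_size _ _)) // size_iota ltnW.
Qed.

Section Cat.
Variables (k : nat) (pi : 'S_k) (f g : nat -> nat) (n p : nat).

Lemma wm_cat_left i : i + k <= n -> wm pi (catf f n g) i = wm pi f i.
Proof.
move=> h; apply: wm_ext => a ha; rewrite /catf.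
have -> : i + a < n by lia.
done.
Qed.

Lemma cnt_cat_split :
  cnt pi (catf f n g) (n + p) =
  count (fun i => (i + k <= n + p) && wm pi (catf f n g) i) (iota 0 n) + cnt pi g p.
Proof.
rewrite /cnt -addnS iotaD count_cat add0n ; congr (_ + _).
rewrite (_ : iota n p.+1 = map (addn n) (iota 0 p.+1)); last by rewrite -iotaDl addn0.
rewrite count_map; apply: eq_count => j /=.
rewrite -addnA leq_add2l; congr (_ && _).
apply: eq_forallb => a; apply: eq_forallb => b.
rewrite /catf.
have -> : n + j + a < n = false by lia.
have -> : n + j + b < n = false by lia.
have -> : n + j + a - n = j + a by lia.
have -> : n + j + b - n = j + b by lia.
by rewrite ltn_add2l.
Qed.

Lemma cnt_f_split :
  cnt pi f n = count (fun i => (i + k <= n) && wm pi f i) (iota 0 n)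
               + ((n + k <= n) && wm pi f n).
Proof. by rewrite /cnt -addn1 iotaD count_cat /= addn0. Qed.

Lemma cnt_cat_le : cnt pi (catf f n g) (n + p) <= cnt pi f n + cnt pi g p + k.
Proof.
rewrite cnt_cat_split cnt_f_split.
have := count_cross n k.
have := @count_le_add (iota 0 n)
  (fun i => (i + k <= n + p) && wm pi (catf f n g) i)
  (fun i => (i + k <= n) && wm pi f i) (fun i => n < i + k).
have H : (forall i, i \in iota 0 n ->
  (i + k <= n + p) && wm pi (catf f n g) i <=
  (i + k <= n) && wm pi f i + (n < i + k)).
  move=> i _; case: (leqP (i + k) n) => h /=.
    by rewrite wm_cat_left // (leq_trans h (leq_addr _ _)) /= addn0.
  by rewrite add0n; case: (_ && _).
move=> /(_ H) => h1 h2. lia.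
Qed.

Lemma cnt_cat_ge : cnt pi f n + cnt pi g p <= cnt pi (catf f n g) (n + p) + 1.
Proof.
rewrite cnt_cat_split cnt_f_split.
have := @count_le_in (iota 0 n)
  (fun i => (i + k <= n) && wm pi f i)
  (fun i => (i + k <= n + p) && wm pi (catf f n g) i).
have H : (forall i, i \in iota 0 n ->
  (i + k <= n) && wm pi f i <= (i + k <= n + p) && wm pi (catf f n g) i).
  move=> i _; case: (leqP (i + k) n) => h //=.
  by rewrite wm_cat_left // (leq_trans h (leq_addr _ _)).
move=> /(_ H) => h1.
have : (n + k <= n) && wm pi f n <= 1 by case: (_ && _).
lia.
Qed.

End Cat.

Fixpoint rep (f : nat -> nat) n a : nat -> nat :=
  match a with 0 => fun _ => 0 | a'.+1 => catf (rep f n a') (a' * n) f end.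

Lemma rep_le k (pi : 'S_k) f n a :
  cnt pi (rep f n a) (a * n) <= a * (cnt pi f n + k) + 1.
Proof.
elim: a => [|a IH].
  by rewrite /cnt /= addn0; case: (_ && _).
rewrite !mulSnr /=.
have := cnt_cat_le pi (rep f n a) f (a * n) n.
nia.
Qed.

Lemma rep_ge k (pi : 'S_k) f n a :
  a * cnt pi f n <= cnt pi (rep f n a) (a * n) + a.
Proof.
elim: a => [|a IH] //.
rewrite !mulSnr /=.
have := cnt_cat_ge pi (rep f n a) f (a * n) n.
nia.
Qed.

Definition isp (f : nat -> nat) n :=
  (forall i, i < n -> f i < n) /\ (forall i j, i < n -> j < n -> f i = f j -> i = j).

Lemma isp_cat f n g p : isp f n -> isp g p -> isp (catf f n g) (n + p).
Proof.
move=> [f1 f2] [g1 g2]; split.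
  move=> i hi; rewrite /catf; case: ifP => h.
    have := f1 i h; lia.
  have := g1 (i - n); lia.
move=> i j hi hj; rewrite /catf; case: ifP => h1; case: ifP => h2.
- exact: f2.
- have := f1 i h1; lia.
- have := f1 j h2; lia.
- move=> e; have : g (i - n) = g (j - n) by lia.
  move=> /g2; lia.
Qed.

Lemma isp_rep f n a : isp f n -> isp (rep f n a) (a * n).
Proof.
move=> hf; elim: a => [|a IH] /=.
  by split => //.
by rewrite mulSnr; apply: isp_cat.
Qed.

Lemma isp_perm n (s : 'S_n) : isp (perm_at s) n.
Proof.
have E : forall i (H : i < n), perm_at s i = val (s (Ordinal H)).
  by move=> i H; rewrite /perm_at insubT.
split.
  by move=> i hi; rewrite (E i hi) ltn_ord.
move=> i j hi hj; rewrite (E i hi) (E j hj) => /val_inj /perm_inj [].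
done.
Qed.

Lemma mkperm f n : isp f n -> {s : 'S_n | forall j, j < n -> perm_at s j = f j}.
Proof.
move=> [h1 h2].
pose h := fun i : 'I_n => insubd i (f i) : 'I_n.
have vh : forall i, val (h i) = f i.
  by move=> i; rewrite /h val_insubd h1.
have hinj : injective h.
  move=> i j e; apply: val_inj; apply: h2; try exact: ltn_ord.
  by have := congr1 val e; rewrite !vh.
exists (perm hinj) => j hj.
by rewrite /perm_at insubT /= permE vh.
Qed.

Lemma cnt_ext k (pi : 'S_k) f g n :
  (forall j, j < n -> f j = g j) -> cnt pi f n = cnt pi g n.
Proof.
move=> H; apply: eq_count => i /=; case: (leqP (i + k) n) => h //=.
apply: wm_ext => a ha; apply: H; lia.
Qed.

Lemma bounds k (pi : 'S_k) n p (s1 : 'S_n) (s2 : 'S_p) A B :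
  let C := cnt pi (catf (rep (perm_at s1) n (p * A)) (p * A * n)
                        (rep (perm_at s2) p (n * B))) (p * A * n + n * B * p) in
  C <= p * A * (cocc pi s1 + k) + n * B * (cocc pi s2 + k) + k + 2 /\
  p * A * cocc pi s1 + n * B * cocc pi s2 <= C + p * A + n * B + 1.
Proof.
rewrite !cocc_cnt /=.
have h1 := cnt_cat_le pi (rep (perm_at s1) n (p * A)) (rep (perm_at s2) p (n * B)) (p * A * n) (n * B * p).
have h2 := cnt_cat_ge pi (rep (perm_at s1) n (p * A)) (rep (perm_at s2) p (n * B)) (p * A * n) (n * B * p).
have h3 := rep_le pi (perm_at s1) n (p * A).
have h4 := rep_le pi (perm_at s2) p (n * B).
have h5 := rep_ge pi (perm_at s1) n (p * A).
have h6 := rep_ge pi (perm_at s2) p (n * B).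
split; nia.
Qed.

Lemma INR_add a b : INR (a + b) = (INR a + INR b)%R.
Proof. by rewrite -plusE plus_INR. Qed.
Lemma INR_mul a b : INR (a * b) = (INR a * INR b)%R.
Proof. by rewrite -multE mult_INR. Qed.
Lemma INR_leq a b : a <= b -> (INR a <= INR b)%R.
Proof. by move=> /leP; apply: le_INR. Qed.

Lemma real_bound (k n p Mm A B c d C : nat) :
  0 < n -> 0 < p -> A + B = Mm -> 0 < Mm ->
  C <= p * A * (c + k) + n * B * (d + k) + k + 2 ->
  p * A * c + n * B * d <= C + p * A + n * B + 1 ->
  (Rabs (INR C / INR (p * A * n + n * B * p) -
     (INR A / INR Mm * (INR c / INR n) + INR B / INR Mm * (INR d / INR p)))
   <= (INR k + 2) * (2 / INR n + / INR p))%R.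
Proof.
move=> hn hp hAB hM h1 h2.
have f1 : p * A <= p * Mm by apply: leq_mul => //; lia.
have f2 : n * B <= n * Mm by apply: leq_mul => //; lia.
have f3 : 1 <= p * Mm by rewrite muln_gt0 hp hM.
have f4 : k * (p * A) <= k * (p * Mm) by apply: leq_mul.
have f5 : k * (n * B) <= k * (n * Mm) by apply: leq_mul.
have f6 : k * 1 <= k * (p * Mm) by apply: leq_mul.
have g1 : C <= p * A * c + n * B * d + (k + 2) * (2 * p * Mm + n * Mm) by nia.
have g2 : p * A * c + n * B * d <= C + (k + 2) * (2 * p * Mm + n * Mm) by nia.
have eL : INR (p * A * n + n * B * p) = (INR n * INR p * INR Mm)%R.
  rewrite -hAB !(INR_add, INR_mul); ring.
rewrite eL.
move: (INR_leq g1) (INR_leq g2).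
rewrite !(INR_add, INR_mul) /= => r1 r2.
have rn : (0 < INR n)%R by apply: lt_0_INR; apply/leP.
have rp : (0 < INR p)%R by apply: lt_0_INR; apply/leP.
have rM : (0 < INR Mm)%R by apply: lt_0_INR; apply/leP.
set D := (INR n * INR p * INR Mm)%R.
have DP : (0 < D)%R by rewrite /D; apply: Rmult_lt_0_compat => //; apply: Rmult_lt_0_compat.
set X := (INR C - (INR p * INR A * INR c + INR n * INR B * INR d))%R.
set Y := ((INR k + 2) * (2 * INR p * INR Mm + INR n * INR Mm))%R.
have hX : (Rabs X <= Y)%R.
  rewrite /X /Y; apply: Rabs_le; simpl in r1, r2; lra.
have e1 : (INR C / D - (INR A / INR Mm * (INR c / INR n) + INR B / INR Mm * (INR d / INR p)))%R
          = (X * / D)%R.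
  rewrite /X /D; field; split; [lra | split; lra].
have e2 : ((INR k + 2) * (2 / INR n + / INR p))%R = (Y * / D)%R.
  rewrite /Y /D; field; split; [lra | split; lra].
rewrite e1 e2 Rabs_mult (Rabs_right (/ D)); last by apply: Rle_ge; apply: Rlt_le; apply: Rinv_0_lt_compat.
apply: Rmult_le_compat_r => //; apply: Rlt_le; apply: Rinv_0_lt_compat => //.
Qed.

Lemma cv_ext (a b : nat -> R) l : (forall m, a m = b m) -> Un_cv a l -> Un_cv b l.
Proof. move=> E H eps he; have [N HN] := H eps he; exists N => m hm; rewrite -E; exact: HN. Qed.

Lemma cv_const (l : R) : Un_cv (fun _ => l) l.
Proof. move=> eps he; exists 0%N => m _; rewrite /R_dist Rminus_diag_eq // Rabs_R0 //. Qed.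

Lemma inv_cv (N : nat -> nat) :
  (forall B, exists M, forall m, (M <= m)%coq_nat -> (B <= N m)%coq_nat) ->
  Un_cv (fun m => / INR (N m))%R 0.
Proof.
move=> H eps he; have [N0 [h1 h2]] := archimed_cor1 eps he.
have [M hM] := H N0; exists M => m hm.
have hN := hM m hm.
have p0 : (0 < INR N0)%R by apply: lt_0_INR.
have pN : (INR N0 <= INR (N m))%R by apply: le_INR.
rewrite /R_dist Rminus_0_r Rabs_right; last by apply: Rle_ge; apply: Rlt_le; apply: Rinv_0_lt_compat; lra.
apply: Rle_lt_trans h1; apply: Rinv_le_contravar => //.
Qed.

Lemma squeeze (e u d : nat -> R) l :
  Un_cv u l -> Un_cv d 0 ->
  (exists M, forall m, (M <= m)%coq_nat -> (Rabs (e m - u m) <= d m)%R) -> Un_cv e l.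
Proof.
move=> Hu Hd [M HM] eps he.
have he2 : (eps / 2 > 0)%R by lra.
have [N1 H1] := Hu _ he2; have [N2 H2] := Hd _ he2.
exists (Nat.max M (Nat.max N1 N2)) => m hm.
have a1 := H1 m ltac:(lia). have a2 := H2 m ltac:(lia). have a3 := HM m ltac:(lia).
rewrite /R_dist in a1 a2 *. rewrite Rminus_0_r in a2.
have a4 := Rle_abs (d m).
have a5 := Rabs_triang (e m - u m) (u m - l).
have -> : (e m - l = (e m - u m) + (u m - l))%R by ring.
lra.
Qed.

Definition Am (t : R) m := Z.to_nat (Int_part (t * INR m.+1)).

Lemma Am_prop t m : (0 <= t <= 1)%R ->
  (Am t m <= m.+1) /\ (Rabs (INR (Am t m) / INR m.+1 - t) <= / INR m.+1)%R.
Proof.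
move=> ht.
have hM : (0 < INR m.+1)%R by apply: lt_0_INR; lia.
set r := (t * INR m.+1)%R.
have hr : (0 <= r <= INR m.+1)%R by rewrite /r; split; nra.
have [b1 b2] := base_Int_part r.
have ip0 : (0 <= Int_part r)%Z.
  have : (-1 < Int_part r)%Z by apply: lt_IZR; rewrite /=; lra.
  lia.
have eA : INR (Am t m) = IZR (Int_part r).
  by rewrite /Am INR_IZR_INZ Z2Nat.id.
split.
  apply/leP; apply: INR_le; lra.
have -> : (INR (Am t m) / INR m.+1 - t = (INR (Am t m) - r) * / INR m.+1)%R.
  rewrite /r; field; lra.
rewrite Rabs_mult (Rabs_right (/ INR m.+1)); last by apply: Rle_ge; apply: Rlt_le; apply: Rinv_0_lt_compat.
rewrite -{2}(Rmult_1_l (/ INR m.+1)).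
apply: Rmult_le_compat_r; first by apply: Rlt_le; apply: Rinv_0_lt_compat.
apply: Rabs_le; lra.
Qed.

Lemma alpha_cv t : (0 <= t <= 1)%R -> Un_cv (fun m => INR (Am t m) / INR m.+1)%R t.
Proof.
move=> ht; apply: (squeeze (u := fun _ => t) (d := fun m => (/ INR m.+1)%R)).
- exact: cv_const.
- apply: (inv_cv (N := fun m => m.+1)) => B; exists B => m hm; lia.
- exists 0%N => m _; exact: (proj2 (Am_prop m ht)).
Qed.

Unset Implicit Arguments.
Theorem mainTheorem8 (k : nat) (v w : 'S_k -> R) (t : R) :
  feasible v -> feasible w -> (0 <= t <= 1)%R ->
  feasible (fun pi => (t * v pi + (1 - t) * w pi)%R).
Proof.
move=> [Hv [N1 [s1 [HN1 Hc1]]]] [Hw [N2 [s2 [HN2 Hc2]]]] Ht.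
split.
  move=> pi; have := Hv pi; have := Hw pi; move=> [? ?] [? ?]; split; nra.
pose A m := Am t m.
pose B m := m.+1 - A m.
have hAB : forall m, A m + B m = m.+1.
  move=> m; have := proj1 (Am_prop m Ht); rewrite /B /A; lia.
pose L m := N2 m * A m * N1 m + N1 m * B m * N2 m.
pose h m := catf (rep (perm_at (s1 m)) (N1 m) (N2 m * A m)) (N2 m * A m * N1 m)
                 (rep (perm_at (s2 m)) (N2 m) (N1 m * B m)).
have isph : forall m, isp (h m) (L m).
  by move=> m; apply: isp_cat; apply: isp_rep; apply: isp_perm.
exists L, (fun m => proj1_sig (mkperm (isph m))).
have [M2 HM2] := HN2 1.
split.
  move=> b; have [M1 HM1] := HN1 b.
  exists (Nat.max M1 M2) => m hm.
  have a1 := HM1 m ltac:(lia). have a2 := HM2 m ltac:(lia).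
  have e : L m = N1 m * (N2 m * m.+1).
    by rewrite /L -(hAB m) mulnDr mulnDr; nia.
  rewrite e.
  have : (0 < N2 m * m.+1) by rewrite muln_gt0; apply/andP; split => //; apply/ltP.
  nia.
move=> pi.
have [M1 HM1] := HN1 1.
apply: (squeeze
  (u := fun m => (INR (A m) / INR m.+1 * cocc_tilde pi (s1 m)
               + INR (B m) / INR m.+1 * cocc_tilde pi (s2 m))%R)
  (d := fun m => ((INR k + 2) * (2 / INR (N1 m) + / INR (N2 m)))%R)).
- apply: CV_plus; apply: CV_mult => //.
    exact: alpha_cv.
  apply: (@cv_ext (fun m => 1 - INR (A m) / INR m.+1)%R).
    move=> m; have := hAB m => e.
    have hM : (0 < INR m.+1)%R by apply: lt_0_INR; lia.
    have -> : INR (B m) = (INR m.+1 - INR (A m))%R.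
      by rewrite -e INR_add; ring.
    field; lra.
  apply: CV_minus; [exact: cv_const | exact: alpha_cv].
- have c1 := inv_cv HN1. have c2 := inv_cv HN2.
  have := CV_mult _ _ _ _ (cv_const (INR k + 2)%R)
           (CV_plus _ _ _ _ (CV_mult _ _ _ _ (cv_const 2%R) c1) c2).
  rewrite (_ : ((INR k + 2) * (2 * 0 + 0) = 0)%R); last by ring.
  apply: cv_ext => m; rewrite /Rdiv; ring.
- exists (Nat.max M1 M2) => m hm.
  have a1 := HM1 m ltac:(lia). have a2 := HM2 m ltac:(lia).
  have [b1 b2] := bounds pi (s1 m) (s2 m) (A m) (B m).
  rewrite /cocc_tilde.
  have -> : cocc pi (proj1_sig (mkperm (isph m))) = cnt pi (h m) (L m).
    rewrite cocc_cnt; apply: cnt_ext => j hj.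
    exact: (proj2_sig (mkperm (isph m)) j hj).
  apply: real_bound b1 b2.
  + by apply/ltP.
  + by apply/ltP.
  + exact: hAB.
  + by [].
Qed.
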